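(* Let $P=u_1;\ldots;u_k$ be a PGLD program and let $\langle\sigma,\alpha\rangle$ be the molecular dynamics state reached from $t_{\mathrm{init}}$ by executing $\mathrm{pgldmd}(P)$ (applying $\mathrm{eff}$ for its methods in order); write $t=\langle\sigma,\alpha\rangle$. Then $\mathrm{yld}(\mathsf{equal}(s,s_1),t)=T$ and for all $j,l\in[1,k]$, $f\in\mathrm{Foci}$, $m\in\mathrm{Meth}$: (i) $u_j=f.m$ iff $\mathrm{yld}(\mathsf{getfield}(u,s_j,\mathsf{focus}),t)=T$, $\mathrm{yld}(\mathsf{equal}(u,f),\mathrm{eff}(\mathsf{getfield}(u,s_j,\mathsf{focus}),t))=T$, $\mathrm{yld}(\mathsf{getfield}(v,s_j,\mathsf{method}),t)=T$, $\mathrm{yld}(\mathsf{equal}(v,m),\mathrm{eff}(\mathsf{getfield}(v,s_j,\mathsf{method}),t))=T$, $\mathrm{yld}(\mathsf{getfield}(s,s_j,\mathsf{pos}),t)=T$, $\mathrm{yld}(\mathsf{equal}(s,s_{j+1}),\mathrm{eff}(\mathsf{getfield}(s,s_j,\mathsf{pos}),t))=T$, $\mathrm{yld}(\mathsf{getfield}(s,s_j,\mathsf{neg}),t)=T$, $\mathrm{yld}(\mathsf{equal}(s,s_{j+1}),\mathrm{eff}(\mathsf{getfield}(s,s_j,\mathsf{neg}),t))=T$; (ii) $u_j=+f.m$ iff the same eight conditions hold except that the last one has $s_{j+2}$ in place of $s_{j+1}$; (iii) $u_j=-f.m$ iff the same eight conditions hold except that the sixth one has $s_{j+2}$ in place of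 $s_{j+1}$; (iv) $u_j=\#\#l$ iff $\mathrm{yld}(\mathsf{getfield}(s,s_j,\mathsf{ajmp}),t)=T$ and $\mathrm{yld}(\mathsf{equal}(s,s_l),\mathrm{eff}(\mathsf{getfield}(s,s_j,\mathsf{ajmp}),t))=T$; (v) $u_j=\#\#l'$ for some $l'\notin[1,k]$ iff $\mathrm{yld}(\mathsf{hasfield}(s_j,\mathsf{stop}),t)=T$.
   Context: PGLD. A PGLD program $u_1;\ldots;u_k$ ($k\ge1$) is a sequence of instructions: basic instructions $f.m$, positive tests $+f.m$, negative tests $-f.m$ ($f\in\mathrm{Foci}$, $m\in\mathrm{Meth}$), and absolute jumps $\#\#l$ ($l\in\mathbb N$). Molecular dynamics. Fix a finite set $\mathrm{Spot}$ of spots; finite disjoint sets $\mathrm{Foci}$, $\mathrm{Meth}$ with $\mathrm{Foci},\mathrm{Meth}\subseteq\mathrm{Spot}$; a finite set $\mathrm{Field}$ containing distinct fields $\mathsf{stop},\mathsf{ajmp},\mathsf{focus},\mathsf{method},\mathsf{pos},\mathsf{neg}$; an infinite countable set $\mathrm{PAtom}$ of proto-atoms, $\bot\notin\mathrm{PAtom}$, with a bijection $\mathrm{proatom}:\mathbb N_{\ge1}\to\mathrm{PAtom}$. A state is a pair $\langle\sigma,\alpha\rangle$ with $\sigma:\mathrm{Spot}\to\mathrm{PAtom}\cup\{\bot\}$, $\alpha$ a map from a finite set $\mathrm{dom}(\alpha)\subseteq\mathrm{PAtom}$ (the atoms) assigning to each atom $a$ a map $\alpha(a)$ from a finite set of fields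 to $\mathrm{PAtom}\cup\{\bot\}$, all values of $\sigma$ and each $\alpha(a)$ lying in $\mathrm{dom}(\alpha)\cup\{\bot\}$. $t_{\mathrm{init}}$ is the state with $\mathrm{dom}(\alpha)=\emptyset$. For a method $m$ and state $t$, $\mathrm{eff}(m,t)$ is the new state and $\mathrm{yld}(m,t)\in\{T,F\}$ the reply; unless stated the state is unchanged (''$v$ is a field of $s$'' means $\sigma(s)\ne\bot$ and $v\in\mathrm{dom}(\alpha(\sigma(s)))$): $\mathsf{create}(s)$: with $a=\mathrm{proatom}(n+1)$, $n=\max\{n':\mathrm{proatom}(n')\in\mathrm{dom}(\alpha)\}$ ($\max\emptyset=0$), set $\sigma(s):=a$ and add atom $a$ with no fields; $T$. $\mathsf{setspot}(s,s')$: $\sigma(s):=\sigma(s')$; $T$. $\mathsf{equal}(s,s')$: $T$ iff $\sigma(s)=\sigma(s')$, else $F$. $\mathsf{addfield}(s,v)$: if $\sigma(s)\ne\bot$ and $v$ is not a field of $s$, add field $v$ with content $\bot$ to atom $\sigma(s)$, $T$; else $F$. $\mathsf{hasfield}(s,v)$: $T$ iff $v$ is a field of $s$, else $F$. $\mathsf{setfield}(s,v,s')$: if $v$ is a field of $s$, set $\alpha(\sigma(s))(v):=\sigma(s')$, $T$; else $F$. $\mathsf{getfield}(s,s',v)$: if $v$ is a field of $s'$, set $\sigma(s):=\alpha(\sigma(s'))(v)$, $T$; else $F$. Representation. Fix pairwise distinct spots $s,u,v,s_1,\ldots,s_{k+2}\in\mathrm{Spot}\setminus(\mathrm{Foci}\cup\mathrm{Meth})$.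 For $P=u_1;\ldots;u_k$ with distinct occurring foci $f_1,\ldots,f_n$ and distinct occurring methods $m_1,\ldots,m_{n'}$, $\mathrm{pgldmd}(P)$ is the sequence of methods $\mathsf{create}(f_1);\ldots;\mathsf{create}(f_n);\mathsf{create}(m_1);\ldots;\mathsf{create}(m_{n'});\mathsf{create}(s_1);\ldots;\mathsf{create}(s_{k+2});\rho_1(u_1);\ldots;\rho_k(u_k);\mathsf{addfield}(s_{k+1},\mathsf{stop});\mathsf{addfield}(s_{k+2},\mathsf{stop});\mathsf{setspot}(s,s_1)$ (followed by termination), where for $u_j\in\{f.m,+f.m,-f.m\}$, $\rho_j(u_j)=\mathsf{addfield}(s_j,\mathsf{focus});\mathsf{addfield}(s_j,\mathsf{method});\mathsf{addfield}(s_j,\mathsf{pos});\mathsf{addfield}(s_j,\mathsf{neg});\mathsf{setfield}(s_j,\mathsf{focus},f);\mathsf{setfield}(s_j,\mathsf{method},m);\mathsf{setfield}(s_j,\mathsf{pos},s_p);\mathsf{setfield}(s_j,\mathsf{neg},s_q)$ with $(p,q)=(j+1,j+1)$ for $f.m$, $(j+1,j+2)$ for $+f.m$, $(j+2,j+1)$ for $-f.m$; $\rho_j(\#\#l)=\mathsf{addfield}(s_j,\mathsf{ajmp});\mathsf{setfield}(s_j,\mathsf{ajmp},s_l)$ if $1\le l\le k$, and $\rho_j(\#\#l)=\mathsf{addfield}(s_j,\mathsf{stop})$ otherwise. *)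

(* Defs.v *)
From mathcomp Require Import all_boot.
Set Implicit Arguments. Unset Strict Implicit. Unset Printing Implicit Defensive.

Section MD.
Variables (Spot Field : finType) (PAtom : eqType).
(* proatom : N_{>=1} -> PAtom bijection, proinv its inverse *)
Variables (proatom : nat -> PAtom) (proinv : PAtom -> nat).

(* A state <sigma, alpha>.  [None] plays the role of bottom.
   [adom] lists dom(alpha); [alpha a v = None] means v is not a field of a,
   [alpha a v = Some c] means v is a field of a with content c. *)
Record state := State {
  sigma : Spot -> option PAtom;
  adom  : seq PAtom;
  alpha : PAtom -> Field -> option (option PAtom) }.

Inductive method :=
| Create   of Spot
| Setspot  of Spot & Spot
| Equal    of Spot & Spot
| Addfield of Spot & Field
| Hasfield of Spot & Field
| Setfield of Spot & Field & Spot
| Getfield of Spot & Spot & Field.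

Definition t_init : state := State (fun _ => None) [::] (fun _ _ => None).

Definition upd_sigma (t : state) (x : Spot) (c : option PAtom) : Spot -> option PAtom :=
  fun y => if y == x then c else sigma t y.

Definition is_field (t : state) (x : Spot) (v : Field) : bool :=
  if sigma t x is Some a then (a \in adom t) && (alpha t a v != None) else false.

Definition field_content (t : state) (x : Spot) (v : Field) : option PAtom :=
  if sigma t x is Some a then (if alpha t a v is Some c then c else None) else None.

Definition eff (m : method) (t : state) : state :=
  match m with
  | Create x =>
      let n := \max_(a <- adom t) proinv a in
      let a := proatom n.+1 in
      State (upd_sigma t x (Some a)) (a :: adom t)
            (fun b => if b == a then (fun _ => None) else alpha t b)
  | Setspot x y => State (upd_sigma t x (sigma t y)) (adom t) (alpha t)
  | Equal _ _ => t
  | Addfield x v =>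
      match sigma t x with
      | Some a => if ~~ is_field t x v then
                    State (sigma t) (adom t)
                      (fun b w => if (b == a) && (w == v) then Some None else alpha t b w)
                  else t
      | None => t
      end
  | Hasfield _ _ => t
  | Setfield x v y =>
      match sigma t x with
      | Some a => if is_field t x v then
                    State (sigma t) (adom t)
                      (fun b w => if (b == a) && (w == v) then Some (sigma t y) else alpha t b w)
                  else t
      | None => t
      end
  | Getfield x y v =>
      if is_field t y v then State (upd_sigma t x (field_content t y v)) (adom t) (alpha t)
      else t
  end.

(* replies: true = T, false = F *)
Definition yld (m : method) (t : state) : bool :=
  match m with
  | Create _ | Setspot _ _ => true
  | Equal x y => sigma t x == sigma t y
  | Addfield x v => (sigma t x != None) && ~~ is_field t x v
  | Hasfield x v | Setfield x v _ | Getfield _ x v => is_field t x v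
  end.

Definition run (ms : seq method) : state := foldl (fun t m => eff m t) t_init ms.

(* PGLD instructions; foci and methods are spots *)
Inductive instr :=
| Basic of Spot & Spot
| PTest of Spot & Spot
| NTest of Spot & Spot
| AJmp of nat.

Definition focus_of (u : instr) : option Spot :=
  match u with Basic f _ | PTest f _ | NTest f _ => Some f | AJmp _ => None end.
Definition meth_of (u : instr) : option Spot :=
  match u with Basic _ m | PTest _ m | NTest _ m => Some m | AJmp _ => None end.

Definition foci_of (P : seq instr) : seq Spot := undup (pmap focus_of P).
Definition meths_of (P : seq instr) : seq Spot := undup (pmap meth_of P).

Variables (fstop fajmp ffocus fmethod fpos fneg : Field).
Variables (s : Spot) (sj : nat -> Spot).

Definition rho_body (j : nat) (f m : Spot) (p q : nat) : seq method :=
  [:: Addfield (sj j) ffocus; Addfield (sj j) fmethod; Addfield (sj j) fpos;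
      Addfield (sj j) fneg; Setfield (sj j) ffocus f; Setfield (sj j) fmethod m;
      Setfield (sj j) fpos (sj p); Setfield (sj j) fneg (sj q)].

Definition rho (k j : nat) (u : instr) : seq method :=
  match u with
  | Basic f m => rho_body j f m j.+1 j.+1
  | PTest f m => rho_body j f m j.+1 j.+2
  | NTest f m => rho_body j f m j.+2 j.+1
  | AJmp l => if (1 <= l <= k) then [:: Addfield (sj j) fajmp; Setfield (sj j) fajmp (sj l)]
              else [:: Addfield (sj j) fstop]
  end.

Definition pgldmd (P : seq instr) : seq method :=
  let k := size P in
  [seq Create f | f <- foci_of P] ++ [seq Create m | m <- meths_of P]
  ++ [seq Create (sj i) | i <- iota 1 (k + 2)]
  ++ flatten [seq rho k p.1 p.2 | p <- zip (iota 1 k) P]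
  ++ [:: Addfield (sj k.+1) fstop; Addfield (sj k.+2) fstop; Setspot s (sj 1)].

End MD.

Arguments Create {Spot Field} _.
Arguments Setspot {Spot Field} _ _.
Arguments Equal {Spot Field} _ _.
Arguments AJmp {Spot} _.

(* Main.v *)
Require Import Defs.
From mathcomp Require Import all_boot.
Set Implicit Arguments. Unset Strict Implicit. Unset Printing Implicit Defensive.
From mathcomp Require Import zify.
Section Pf.
Variables (Spot Field : finType) (PAtom : eqType) (proatom : nat -> PAtom) (proinv : PAtom -> nat).
Hypothesis Hpro1 : forall n, 0 < n -> proinv (proatom n) = n.
Variables (fstop fajmp ffocus fmethod fpos fneg : Field).
Hypothesis Hf : uniq [:: fstop; fajmp; ffocus; fmethod; fpos; fneg].
Lemma n_fstop_fajmp : (fstop == fajmp) = false.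
Proof. by apply/eqP => E; move: Hf; rewrite E /= !inE !eqxx /= ?orbT ?andbF. Qed.
Lemma n_fstop_ffocus : (fstop == ffocus) = false.
Proof. by apply/eqP => E; move: Hf; rewrite E /= !inE !eqxx /= ?orbT ?andbF. Qed.
Lemma n_fstop_fmethod : (fstop == fmethod) = false.
Proof. by apply/eqP => E; move: Hf; rewrite E /= !inE !eqxx /= ?orbT ?andbF. Qed.
Lemma n_fstop_fpos : (fstop == fpos) = false.
Proof. by apply/eqP => E; move: Hf; rewrite E /= !inE !eqxx /= ?orbT ?andbF. Qed.
Lemma n_fstop_fneg : (fstop == fneg) = false.
Proof. by apply/eqP => E; move: Hf; rewrite E /= !inE !eqxx /= ?orbT ?andbF. Qed.
Lemma n_fajmp_fstop : (fajmp == fstop) = false.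
Proof. by apply/eqP => E; move: Hf; rewrite E /= !inE !eqxx /= ?orbT ?andbF. Qed.
Lemma n_fajmp_ffocus : (fajmp == ffocus) = false.
Proof. by apply/eqP => E; move: Hf; rewrite E /= !inE !eqxx /= ?orbT ?andbF. Qed.
Lemma n_fajmp_fmethod : (fajmp == fmethod) = false.
Proof. by apply/eqP => E; move: Hf; rewrite E /= !inE !eqxx /= ?orbT ?andbF. Qed.
Lemma n_fajmp_fpos : (fajmp == fpos) = false.
Proof. by apply/eqP => E; move: Hf; rewrite E /= !inE !eqxx /= ?orbT ?andbF. Qed.
Lemma n_fajmp_fneg : (fajmp == fneg) = false.
Proof. by apply/eqP => E; move: Hf; rewrite E /= !inE !eqxx /= ?orbT ?andbF. Qed.
Lemma n_ffocus_fstop : (ffocus == fstop) = false.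
Proof. by apply/eqP => E; move: Hf; rewrite E /= !inE !eqxx /= ?orbT ?andbF. Qed.
Lemma n_ffocus_fajmp : (ffocus == fajmp) = false.
Proof. by apply/eqP => E; move: Hf; rewrite E /= !inE !eqxx /= ?orbT ?andbF. Qed.
Lemma n_ffocus_fmethod : (ffocus == fmethod) = false.
Proof. by apply/eqP => E; move: Hf; rewrite E /= !inE !eqxx /= ?orbT ?andbF. Qed.
Lemma n_ffocus_fpos : (ffocus == fpos) = false.
Proof. by apply/eqP => E; move: Hf; rewrite E /= !inE !eqxx /= ?orbT ?andbF. Qed.
Lemma n_ffocus_fneg : (ffocus == fneg) = false.
Proof. by apply/eqP => E; move: Hf; rewrite E /= !inE !eqxx /= ?orbT ?andbF. Qed.
Lemma n_fmethod_fstop : (fmethod == fstop) = false.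
Proof. by apply/eqP => E; move: Hf; rewrite E /= !inE !eqxx /= ?orbT ?andbF. Qed.
Lemma n_fmethod_fajmp : (fmethod == fajmp) = false.
Proof. by apply/eqP => E; move: Hf; rewrite E /= !inE !eqxx /= ?orbT ?andbF. Qed.
Lemma n_fmethod_ffocus : (fmethod == ffocus) = false.
Proof. by apply/eqP => E; move: Hf; rewrite E /= !inE !eqxx /= ?orbT ?andbF. Qed.
Lemma n_fmethod_fpos : (fmethod == fpos) = false.
Proof. by apply/eqP => E; move: Hf; rewrite E /= !inE !eqxx /= ?orbT ?andbF. Qed.
Lemma n_fmethod_fneg : (fmethod == fneg) = false.
Proof. by apply/eqP => E; move: Hf; rewrite E /= !inE !eqxx /= ?orbT ?andbF. Qed.
Lemma n_fpos_fstop : (fpos == fstop) = false.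
Proof. by apply/eqP => E; move: Hf; rewrite E /= !inE !eqxx /= ?orbT ?andbF. Qed.
Lemma n_fpos_fajmp : (fpos == fajmp) = false.
Proof. by apply/eqP => E; move: Hf; rewrite E /= !inE !eqxx /= ?orbT ?andbF. Qed.
Lemma n_fpos_ffocus : (fpos == ffocus) = false.
Proof. by apply/eqP => E; move: Hf; rewrite E /= !inE !eqxx /= ?orbT ?andbF. Qed.
Lemma n_fpos_fmethod : (fpos == fmethod) = false.
Proof. by apply/eqP => E; move: Hf; rewrite E /= !inE !eqxx /= ?orbT ?andbF. Qed.
Lemma n_fpos_fneg : (fpos == fneg) = false.
Proof. by apply/eqP => E; move: Hf; rewrite E /= !inE !eqxx /= ?orbT ?andbF. Qed.
Lemma n_fneg_fstop : (fneg == fstop) = false.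
Proof. by apply/eqP => E; move: Hf; rewrite E /= !inE !eqxx /= ?orbT ?andbF. Qed.
Lemma n_fneg_fajmp : (fneg == fajmp) = false.
Proof. by apply/eqP => E; move: Hf; rewrite E /= !inE !eqxx /= ?orbT ?andbF. Qed.
Lemma n_fneg_ffocus : (fneg == ffocus) = false.
Proof. by apply/eqP => E; move: Hf; rewrite E /= !inE !eqxx /= ?orbT ?andbF. Qed.
Lemma n_fneg_fmethod : (fneg == fmethod) = false.
Proof. by apply/eqP => E; move: Hf; rewrite E /= !inE !eqxx /= ?orbT ?andbF. Qed.
Lemma n_fneg_fpos : (fneg == fpos) = false.
Proof. by apply/eqP => E; move: Hf; rewrite E /= !inE !eqxx /= ?orbT ?andbF. Qed.
Definition fneqE := (n_fstop_fajmp, n_fstop_ffocus, n_fstop_fmethod, n_fstop_fpos, n_fstop_fneg, n_fajmp_fstop, n_fajmp_ffocus, n_fajmp_fmethod, n_fajmp_fpos, n_fajmp_fneg, n_ffocus_fstop, n_ffocus_fajmp, n_ffocus_fmethod, n_ffocus_fpos, n_ffocus_fneg, n_fmethod_fstop, n_fmethod_fajmp, n_fmethod_ffocus, n_fmethod_fpos, n_fmethod_fneg, n_fpos_fstop, n_fpos_fajmp, n_fpos_ffocus, n_fpos_fmethod, n_fpos_fneg, n_fneg_fstop, n_fneg_fajmp, n_fneg_ffocus, n_fneg_fmethod, n_fneg_fpos).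

Notation E := (@eff Spot Field PAtom proatom proinv).
Notation Y := (@yld Spot Field PAtom).
Notation st := (state Spot Field PAtom).
Definition step (t : st) (m : method Spot Field) := E m t.

Definition Cinv (L : seq Spot) (t : st) :=
 [/\ forall b w, alpha t b w = None,
     forall x, x \in L -> exists2 a, sigma t x = Some a & a \in adom t,
     forall x y, x \in L -> y \in L -> sigma t x = sigma t y -> x = y
   & forall x, x \notin L -> sigma t x = None].

Lemma Cinv_eq L1 L2 t : L1 =i L2 -> Cinv L1 t -> Cinv L2 t.
Proof.
move=> HL [H1 H2 H3 H4]; split=> //.
- by move=> x; rewrite -HL; apply: H2.
- by move=> x y; rewrite -!HL; apply: H3.
- by move=> x; rewrite -HL; apply: H4.
Qed.

Lemma Cinv_create L t x : Cinv L t -> x \notin L -> Cinv (x :: L) (E (Create x) t).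
Proof.
move=> [H1 H2 H3 H4] xL /=.
set n := \max_(a <- adom t) proinv a.
have fresh : proatom n.+1 \notin adom t.
  apply/negP => Hin.
  have := @leq_bigmax_seq _ (adom t) xpredT proinv _ Hin erefl.
  by rewrite Hpro1 // ltnn.
split=> /=.
- by move=> b w; case: ifP.
- move=> y; rewrite inE /upd_sigma; case: eqP => [_ _|_ /= /H2 [a Ha Hin]].
    by exists (proatom n.+1); rewrite ?inE ?eqxx.
  by exists a; rewrite // inE Hin orbT.
- move=> y z; rewrite !inE /upd_sigma.
  case: (y =P x) => [->|ny]; case: (z =P x) => [->|nz] //= yL zL.
  + case: (H2 _ zL) => a -> Ha [] Ea; by move: fresh; rewrite Ea Ha.
  + case: (H2 _ yL) => a -> Ha [] Ea; by move: fresh; rewrite -Ea Ha.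
  + exact: H3.
- move=> y; rewrite inE negb_or /upd_sigma => /andP[/negbTE -> /H4 //].
Qed.

Lemma Cinv_creates l : forall t L, uniq (rev l ++ L) -> Cinv L t ->
  Cinv (rev l ++ L) (foldl step t [seq Create x | x <- l]).
Proof.
elim: l => [|x l IH] t L //= U C.
move: U; rewrite rev_cons cat_rcons => U.
apply: IH => //.
apply: Cinv_create => //.
move: U; rewrite cat_uniq => /and3P[_ _ /=]; by case/andP.
Qed.

Variable sj : nat -> Spot.
Arguments step : simpl never.

Definition fldb (sig : Spot -> option PAtom) (f m : Spot) (p q : nat) (w : Field)
  : option (option PAtom) :=
  if w == fneg then Some (sig (sj q)) else if w == fpos then Some (sig (sj p))
  else if w == fmethod then Some (sig m) else if w == ffocus then Some (sig f) else None.

Definition fld (sig : Spot -> option PAtom) (k j : nat) (u : instr Spot) (w : Field) :=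
  match u with
  | Basic f m => fldb sig f m j.+1 j.+1 w
  | PTest f m => fldb sig f m j.+1 j.+2 w
  | NTest f m => fldb sig f m j.+2 j.+1 w
  | AJmp l => if 1 <= l <= k then (if w == fajmp then Some (sig (sj l)) else None)
              else (if w == fstop then Some None else None)
  end.

Lemma addF sig ad al x v a : sig x = Some a -> al a v = None ->
  step (State sig ad al) (Addfield x v) =
  State sig ad (fun b w => if (b == a) && (w == v) then Some None else al b w).
Proof. by move=> Hx Hv; rewrite /step /= /is_field /= Hx Hv andbF. Qed.

Lemma setF sig ad al x v y a : sig x = Some a -> a \in ad -> al a v <> None ->
  step (State sig ad al) (Setfield x v y) =
  State sig ad (fun b w => if (b == a) && (w == v) then Some (sig y) else al b w).
Proof.
move=> Hx Ha Hv; rewrite /step /= /is_field /= Hx Ha /=.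
by case: (al a v) Hv.
Qed.

Lemma rho1 sig ad al k j u a : sig (sj j) = Some a -> a \in ad -> (forall w, al a w = None) ->
  exists al1, foldl step (State sig ad al) (rho fstop fajmp ffocus fmethod fpos fneg sj k j u)
     = State sig ad al1 /\ forall b w, al1 b w = if b == a then fld sig k j u w else al b w.
Proof.
move=> Hs Ha Hal.
case: u => [f m|f m|f m|l] /=; last first.
  case: ifP => Hl /=.
  - rewrite (@addF _ _ _ _ _ _ Hs); last by rewrite Hal.
    rewrite (@setF _ _ _ _ _ _ _ Hs Ha); last by rewrite /= ?eqxx.
    eexists; split; first reflexivity.
    move=> b w; have [->|nb] := eqVneq b a; last by [].
    by rewrite /=; case: (w == fajmp).
  - rewrite (@addF _ _ _ _ _ _ Hs); last by rewrite Hal.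
    eexists; split; first reflexivity.
    move=> b w; have [->|nb] := eqVneq b a; last by [].
    by rewrite /=; case: (w == fstop).
all: rewrite /rho_body /=.
all: do 4 (rewrite (@addF _ _ _ _ _ _ Hs); last by rewrite /= ?eqxx ?fneqE /= ?Hal).
all: do 4 (rewrite (@setF _ _ _ _ _ _ _ Hs Ha); last by rewrite /= ?eqxx ?fneqE /= ?Hal).
all: eexists; split; first reflexivity.
all: move=> b w; have [->|nb] := eqVneq b a; last by [].
all: rewrite /fldb /=.
all: by case: (w == fneg); case: (w == fpos); case: (w == fmethod); case: (w == ffocus).
Qed.

Lemma rho_all sig ad k (atm : nat -> PAtom)
  (Hat : forall i, 0 < i <= k.+2 -> sig (sj i) = Some (atm i))
  (Had : forall i, 0 < i <= k.+2 -> atm i \in ad)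
  (Hinj : forall i i', 0 < i <= k.+2 -> 0 < i' <= k.+2 -> atm i = atm i' -> i = i') :
  forall Q i0 al, 0 < i0 -> i0 + size Q <= k.+1 ->
  (forall n w, n < size Q -> al (atm (i0 + n)) w = None) ->
  exists al', foldl step (State sig ad al)
     (flatten [seq rho fstop fajmp ffocus fmethod fpos fneg sj k p.1 p.2 | p <- zip (iota i0 (size Q)) Q])
     = State sig ad al' /\
   (forall n w, n < size Q -> al' (atm (i0 + n)) w = fld sig k (i0 + n) (nth (AJmp 0) Q n) w) /\
   (forall b w, (forall n, n < size Q -> b != atm (i0 + n)) -> al' b w = al b w).
Proof.
elim=> [|x Q IH] i0 al H0 Hsz Hal /=.
  by exists al; split.
rewrite foldl_cat; move: Hsz => /= Hsz.
have Hr0 : 0 < i0 <= k.+2 by lia.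
have [al1 [E1 H1]] : exists al1, foldl step (State sig ad al) (rho fstop fajmp ffocus fmethod fpos fneg sj k i0 x)
     = State sig ad al1 /\ forall b w, al1 b w = if b == atm i0 then fld sig k i0 x w else al b w.
  apply: rho1; [exact: Hat|exact: Had|move=> w; rewrite -[i0]addn0; exact: Hal].
rewrite E1.
have Hne : forall n, n < size Q -> (atm (i0.+1 + n) == atm i0) = false.
  move=> n Hn; apply/eqP.
  have r1 : 0 < i0.+1 + n <= k.+2 by lia.
  move/(Hinj _ _ r1 Hr0); lia.
have [al' [E2 [H2 H3]]] : exists al', foldl step (State sig ad al1)
     (flatten [seq rho fstop fajmp ffocus fmethod fpos fneg sj k p.1 p.2 | p <- zip (iota i0.+1 (size Q)) Q])
     = State sig ad al' /\
   (forall n w, n < size Q -> al' (atm (i0.+1 + n)) w = fld sig k (i0.+1 + n) (nth (AJmp 0) Q n) w) /\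
   (forall b w, (forall n, n < size Q -> b != atm (i0.+1 + n)) -> al' b w = al1 b w).
  apply: IH => //; first lia.
  move=> n w Hn; rewrite H1 Hne // addSnnS; exact: Hal.
exists al'; split=> //; split.
- case=> [|n] w Hn.
  + rewrite addn0 H3 ?H1 ?eqxx //.
    by move=> n Hn'; rewrite eq_sym Hne.
  + by rewrite -addSnnS H2.
- move=> b w Hb; rewrite H3.
  + by rewrite H1 -[i0]addn0 (negbTE (Hb 0 erefl)).
  + by move=> n Hn; rewrite addSnnS; apply: Hb.
Qed.

Lemma addframe sig ad al x v : exists al', step (State sig ad al) (Addfield x v) = State sig ad al'
  /\ forall b w, sig x <> Some b -> al' b w = al b w.
Proof.
rewrite /step /=; case Hx: (sig x) => [a|]; last by exists al.
case: ifP => _; last by exists al.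
eexists; split; first reflexivity.
move=> b w nb; have [Eb|nb'] := eqVneq b a; first by case: nb; rewrite Eb.
by [].
Qed.

Lemma gf_eq (t : st) x y z w a : x != y -> sigma t z = Some a -> a \in adom t ->
  (Y (Getfield x z w) t /\ Y (Equal x y) (E (Getfield x z w) t)) <-> alpha t a w = Some (sigma t y).
Proof.
move=> nxy Hz Ha; rewrite /= /is_field Hz Ha /=.
rewrite /field_content Hz /upd_sigma.
case: (alpha t a w) => [c|] /=.
- have nyx : (y == x) = false by rewrite eq_sym (negbTE nxy).
  rewrite eqxx nyx.
  split; first by case=> _ /eqP ->.
  by case=> ->; rewrite eqxx.
- by split=> [[]|].
Qed.

Lemma c8_iff (G1 E1 G2 E2 G3 E3 G4 E4 A1 A2 A3 A4 : Prop) :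
  (G1 /\ E1 <-> A1) -> (G2 /\ E2 <-> A2) -> (G3 /\ E3 <-> A3) -> (G4 /\ E4 <-> A4) ->
  (G1 /\ E1 /\ G2 /\ E2 /\ G3 /\ E3 /\ G4 /\ E4 <-> A1 /\ A2 /\ A3 /\ A4).
Proof. tauto. Qed.

Lemma mem_pmap' (A : Type) (B : eqType) (g : A -> option B) (r : seq A) (b : B) :
  Some b \in [seq g i | i <- r] -> b \in pmap g r.
Proof.
elim: r => [|x r IH] //=; rewrite inE.
case E: (g x) => [c|] /=; rewrite ?inE.
- by case/orP => [/eqP [->]|/IH ->]; rewrite ?eqxx ?orbT.
- by [].
Qed.

Lemma main (Foci Meth : {set Spot}) (HFM : [disjoint Foci & Meth])
  (P : seq (instr Spot))
  (Hk : 0 < size P)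
  (HPfoci : forall f, f \in foci_of P -> f \in Foci)
  (HPmeth : forall m, m \in meths_of P -> m \in Meth)
  (s u v : Spot)
  (Hsuv : uniq [:: s; u; v])
  (Hsj_inj : forall i i', 1 <= i <= size P + 2 -> 1 <= i' <= size P + 2 ->
                sj i = sj i' -> i = i')
  (Hsj_suv : forall i, 1 <= i <= size P + 2 -> sj i \notin [:: s; u; v])
  (Hspots : forall x, x \in s :: u :: v :: [seq sj i | i <- iota 1 (size P + 2)] ->
                x \notin Foci :|: Meth) :
  let k := size P in
  let t := run proatom proinv (pgldmd fstop fajmp ffocus fmethod fpos fneg s sj P) in
  Y (Equal s (sj 1)) t /\
  forall (j l : nat) (f m : Spot),
    1 <= j <= k -> 1 <= l <= k -> f \in Foci -> m \in Meth ->
    let uj := nth (AJmp 0) P j.-1 in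
    let c8 (p q : nat) :=
      Y (Getfield u (sj j) ffocus) t /\
      Y (Equal u f) (E (Getfield u (sj j) ffocus) t) /\
      Y (Getfield v (sj j) fmethod) t /\
      Y (Equal v m) (E (Getfield v (sj j) fmethod) t) /\
      Y (Getfield s (sj j) fpos) t /\
      Y (Equal s (sj p)) (E (Getfield s (sj j) fpos) t) /\
      Y (Getfield s (sj j) fneg) t /\
      Y (Equal s (sj q)) (E (Getfield s (sj j) fneg) t) in
    [/\ (uj = Basic f m <-> c8 j.+1 j.+1),
        (uj = PTest f m <-> c8 j.+1 j.+2),
        (uj = NTest f m <-> c8 j.+2 j.+1),
        (uj = AJmp l <->
           Y (Getfield s (sj j) fajmp) t /\
           Y (Equal s (sj l)) (E (Getfield s (sj j) fajmp) t)) &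
        ((exists l', ~~ (1 <= l' <= k) /\ uj = AJmp l') <->
           Y (Hasfield (sj j) fstop) t)].
Proof.
move=> k t.
set foc := foci_of P. set mth := meths_of P. set sjs := [seq sj i | i <- iota 1 (k + 2)].
set l := foc ++ mth ++ sjs.
have Et : t = foldl step (@t_init Spot Field PAtom) ([seq Create x | x <- l] ++
   (flatten [seq rho fstop fajmp ffocus fmethod fpos fneg sj k p.1 p.2 | p <- zip (iota 1 k) P]
    ++ [:: Addfield (sj k.+1) fstop; Addfield (sj k.+2) fstop; Setspot s (sj 1)])).
  by rewrite /t /run /pgldmd /l /sjs !map_cat -map_comp -!catA.
have Uniq : uniq l.
  have sjsFM : forall x, x \in sjs -> x \notin Foci /\ x \notin Meth.
    move=> x Hx; have := Hspots x; rewrite !inE Hx !orbT => /(_ isT).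
    by rewrite ?in_setU negb_or => /andP.
  have uf : uniq foc by exact: undup_uniq.
  have um : uniq mth by exact: undup_uniq.
  have us : uniq sjs.
    rewrite /sjs map_inj_in_uniq ?iota_uniq // => x y; rewrite !mem_iota => Hx Hy.
    apply: Hsj_inj; rewrite /k in Hx Hy; lia.
  rewrite /l cat_uniq uf /= cat_uniq um us /= andbT.
  apply/andP; split.
  - rewrite has_cat negb_or; apply/andP; split; apply/hasPn => x Hx; apply/negP => /HPfoci xF.
    + by move: (HPmeth _ Hx); rewrite (disjointFr HFM xF).
    + by case: (sjsFM _ Hx); rewrite xF.
  - apply/hasPn => x Hx; apply/negP => /HPmeth xM; by case: (sjsFM _ Hx); rewrite xM.
have C0 : Cinv l (foldl step (@t_init Spot Field PAtom) [seq Create x | x <- l]).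
  apply: (@Cinv_eq (rev l ++ [::])); first by move=> x; rewrite cats0 mem_rev.
  apply: Cinv_creates; first by rewrite cats0 rev_uniq.
  by split=> //= x _; exists (proatom 0).
clearbody t.
move: Et; rewrite foldl_cat.
case: (foldl step (@t_init Spot Field PAtom) [seq Create x | x <- l]) C0 => sig ad al0 C0 Et.
case: C0 => H1 H2 H3 H4; rewrite /= in H1 H2 H3 H4.
have sjl : forall i, 0 < i <= k.+2 -> sj i \in l.
  move=> i Hi; rewrite /l !mem_cat; apply/orP; right; apply/orP; right.
  rewrite /sjs; apply: map_f; rewrite mem_iota; lia.
pose atm i := if sig (sj i) is Some a then a else proatom 0.
have Hat : forall i, 0 < i <= k.+2 -> sig (sj i) = Some (atm i).
  move=> i /sjl /H2 [a Ha _]; by rewrite /atm Ha.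
have Had : forall i, 0 < i <= k.+2 -> atm i \in ad.
  move=> i /sjl /H2 [a Ha Hin]; by rewrite /atm Ha.
have Hinj : forall i i', 0 < i <= k.+2 -> 0 < i' <= k.+2 -> atm i = atm i' -> i = i'.
  move=> i i' Hi Hi' Ea; apply: Hsj_inj; rewrite ?addn2 //.
  by apply: H3; rewrite ?sjl // Hat // Hat // Ea.
move: Et; rewrite foldl_cat.
have [al1 [E1 [A1 A2]]] := @rho_all sig ad k atm Hat Had Hinj P 1 al0 erefl (ltac:(rewrite /k; lia))
   (fun n w _ => H1 _ _).
rewrite E1 => Et; rewrite /= in Et.
have [al2 [E2 F2]] := addframe sig ad al1 (sj k.+1) fstop.
have [al3 [E3 F3]] := addframe sig ad al2 (sj k.+2) fstop.
rewrite E2 E3 /step /= in Et.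
have nsjs : forall p, 0 < p <= k.+2 -> (sj p == s) = false.
  move=> p Hp; have := Hsj_suv p (ltac:(rewrite /k in Hp; lia)).
  by rewrite !inE negb_or => /andP[/negbTE -> _].
have Hsig : forall y, y != s -> sigma t y = sig y.
  by move=> y ny; rewrite Et /= /upd_sigma (negbTE ny).
have Hadom : adom t = ad by rewrite Et.
have Halpha : forall j, 0 < j <= k -> forall w,
    alpha t (atm j) w = fld sig k j (nth (AJmp 0) P j.-1) w.
  move=> j Hj w; rewrite Et /= F3; last first.
    rewrite Hat; last lia. by case=> /Hinj; lia.
  rewrite F2; last first.
    rewrite Hat; last lia. by case=> /Hinj; lia.
  have -> : j = 1 + j.-1 by lia.
  rewrite A1; last by rewrite /k in Hj; lia.
  by rewrite add1n.
split.
  by rewrite /= Et /= /upd_sigma eqxx nsjs.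
clear Et.
move=> j l0 f m Hj Hl0 Hfo Hme; cbv beta zeta.
have Hjr : 0 < j <= k.+2 by lia.
have H1r : 0 < j.+1 <= k.+2 by lia.
have H2r : 0 < j.+2 <= k.+2 by lia.
have Hl0r : 0 < l0 <= k.+2 by lia.
have key : j.+1 <> j.+2 by lia.
have Hjs : j.-1 < size P by rewrite /k in Hj; lia.
have HfP : focus_of (nth (AJmp 0) P j.-1) \in [seq focus_of i | i <- P].
  by rewrite -(nth_map (AJmp 0) None) // mem_nth // size_map.
have HmP : meth_of (nth (AJmp 0) P j.-1) \in [seq meth_of i | i <- P].
  by rewrite -(nth_map (AJmp 0) None) // mem_nth // size_map.
have rng : forall x, 0 < x <= k -> 0 < x <= k.+2 by move=> x; lia.
have injS : forall p q, 0 < p <= k.+2 -> 0 < q <= k.+2 -> Some (sig (sj p)) = Some (sig (sj q)) -> p = q.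
  by move=> p q Hp Hq; rewrite !Hat // => -[/Hinj]; apply.
have injL : forall x y, x \in l -> Some (sig x) = Some (sig y) -> x = y.
  move=> x y xl [] Exy; have [a Ha Hin] := H2 x xl.
  have [yl|nyl] := boolP (y \in l); first exact: H3.
  by move: Exy; rewrite Ha H4.
have focl : forall f', Some f' \in [seq focus_of i | i <- P] -> f' \in l.
  by move=> f' H; rewrite /l !mem_cat /foc /foci_of mem_undup (mem_pmap' H).
have methl : forall f', Some f' \in [seq meth_of i | i <- P] -> f' \in l.
  by move=> f' H; rewrite /l !mem_cat /mth /meths_of mem_undup (mem_pmap' H) orbT.
have nsj : forall p, 0 < p <= k.+2 -> sj p != s by move=> p Hp; rewrite nsjs.
have Ha : sigma t (sj j) = Some (atm j) by rewrite Hsig ?nsj // Hat.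
have Hadj : atm j \in adom t by rewrite Hadom; apply: Had.
have nFM : forall x, x \in s :: u :: v :: sjs -> x \notin Foci /\ x \notin Meth.
  by move=> x /Hspots; rewrite in_setU negb_or => /andP[].
have [nuF _] := nFM u (ltac:(by rewrite !inE eqxx orbT)).
have [_ nvM] := nFM v (ltac:(by rewrite !inE eqxx !orbT)).
have [nsF nsM] := nFM s (ltac:(by rewrite !inE eqxx)).
have uf : u != f by apply/eqP=> Eq; move: nuF; rewrite Eq Hfo.
have vm : v != m by apply/eqP=> Eq; move: nvM; rewrite Eq Hme.
have sf : f != s by apply/eqP=> Eq; move: nsF; rewrite -Eq Hfo.
have sm : m != s by apply/eqP=> Eq; move: nsM; rewrite -Eq Hme.
set uj := nth (AJmp 0) P j.-1.
set F := fld sig k j uj.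
have HF : forall w, alpha t (atm j) w = F w by move=> w; rewrite Halpha.
have C8 : forall p q, 0 < p <= k.+2 -> 0 < q <= k.+2 ->
   ((Y (Getfield u (sj j) ffocus) t /\
     Y (Equal u f) (E (Getfield u (sj j) ffocus) t) /\
     Y (Getfield v (sj j) fmethod) t /\
     Y (Equal v m) (E (Getfield v (sj j) fmethod) t) /\
     Y (Getfield s (sj j) fpos) t /\
     Y (Equal s (sj p)) (E (Getfield s (sj j) fpos) t) /\
     Y (Getfield s (sj j) fneg) t /\
     Y (Equal s (sj q)) (E (Getfield s (sj j) fneg) t)) <->
    F ffocus = Some (sig f) /\ F fmethod = Some (sig m) /\
    F fpos = Some (sig (sj p)) /\ F fneg = Some (sig (sj q))).
  move=> p q Hp Hq.
  have sp : s != sj p by rewrite eq_sym nsj.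
  have sq : s != sj q by rewrite eq_sym nsj.
  apply: (iff_trans (c8_iff (@gf_eq t u f (sj j) ffocus (atm j) uf Ha Hadj)
     (@gf_eq t v m (sj j) fmethod (atm j) vm Ha Hadj)
     (@gf_eq t s (sj p) (sj j) fpos (atm j) sp Ha Hadj)
     (@gf_eq t s (sj q) (sj j) fneg (atm j) sq Ha Hadj))).
  by rewrite 4!HF (Hsig f sf) (Hsig m sm) (Hsig (sj p) (nsj p Hp)) (Hsig (sj q) (nsj q Hq)).
have C9 : (Y (Getfield s (sj j) fajmp) t /\
           Y (Equal s (sj l0)) (E (Getfield s (sj j) fajmp) t)) <-> F fajmp = Some (sig (sj l0)).
  have Hl0' : 0 < l0 <= k.+2.
    by case/andP: Hl0 => H1' H2'; rewrite H1' /=; exact: (leq_trans H2' (leqW (leqnSn k))).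
  have sp : s != sj l0 by rewrite eq_sym nsj.
  apply: (iff_trans (@gf_eq t s (sj l0) (sj j) fajmp (atm j) sp Ha Hadj)); by rewrite HF (Hsig _ (nsj l0 Hl0')).
have C10 : Y (Hasfield (sj j) fstop) t <-> F fstop != None.
  by rewrite /yld /is_field Ha Hadj HF.
suff : [/\ uj = Basic f m <-> F ffocus = Some (sig f) /\ F fmethod = Some (sig m) /\
                          F fpos = Some (sig (sj j.+1)) /\ F fneg = Some (sig (sj j.+1)),
  uj = PTest f m <-> F ffocus = Some (sig f) /\ F fmethod = Some (sig m) /\
                          F fpos = Some (sig (sj j.+1)) /\ F fneg = Some (sig (sj j.+2)),
  uj = NTest f m <-> F ffocus = Some (sig f) /\ F fmethod = Some (sig m) /\
                          F fpos = Some (sig (sj j.+2)) /\ F fneg = Some (sig (sj j.+1)),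
  uj = AJmp l0 <-> F fajmp = Some (sig (sj l0)) &
  (exists l', ~~ (0 < l' <= k) /\ uj = AJmp l') <-> F fstop != None].
  case=> X1 X2 X3 X4 X5; split.
  - exact: (iff_trans X1 (iff_sym (C8 _ _ H1r H1r))).
  - exact: (iff_trans X2 (iff_sym (C8 _ _ H1r H2r))).
  - exact: (iff_trans X3 (iff_sym (C8 _ _ H2r H1r))).
  - exact: (iff_trans X4 (iff_sym C9)).
  - exact: (iff_trans X5 (iff_sym C10)).
rewrite /F /uj; clear C8 C9 C10 HF F uj.
case: (nth (AJmp 0) P j.-1) HfP HmP => [f' m'|f' m'|f' m'|l'] /= HfP HmP.
- have f'l := focl _ HfP; have m'l := methl _ HmP.
  rewrite /fldb ?fneqE ?eqxx /=; split.
  + split; first by case=> -> ->.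
    by case=> /(injL _ _ f'l) -> [/(injL _ _ m'l) -> _].
  + split=> //; by case=> _ [_ [_ /(injS _ _ H1r H2r)/key []]].
  + split=> //; by case=> _ [_ [/(injS _ _ H1r H2r)/key []]].
  + by split.
  + by split=> // -[? []].
- have f'l := focl _ HfP; have m'l := methl _ HmP.
  rewrite /fldb ?fneqE ?eqxx /=; split.
  + split=> //; by case=> _ [_ [_ /(injS _ _ H2r H1r)/esym/key []]].
  + split; first by case=> -> ->.
    by case=> /(injL _ _ f'l) -> [/(injL _ _ m'l) -> _].
  + split=> //; by case=> _ [_ [/(injS _ _ H1r H2r)/key []]].
  + by split.
  + by split=> // -[? []].
- have f'l := focl _ HfP; have m'l := methl _ HmP.
  rewrite /fldb ?fneqE ?eqxx /=; split.
  + split=> //; by case=> _ [_ [/(injS _ _ H2r H1r)/esym/key []]].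
  + split=> //; by case=> _ [_ [/(injS _ _ H2r H1r)/esym/key []]].
  + split; first by case=> -> ->.
    by case=> /(injL _ _ f'l) -> [/(injL _ _ m'l) -> _].
  + by split.
  + by split=> // -[? []].
- case Hr: (0 < l' <= k); rewrite ?fneqE ?eqxx /=.
  + have Hl'r := rng _ Hr.
    split; try by split=> //; case.
    * split; first by case=> ->.
      by move/(injS _ _ Hl'r Hl0r) ->.
    * split=> //; case=> l2 [nr [E']]; by move: nr; rewrite -E' Hr.
  + split; try by split=> //; case.
    * split=> //; case=> E'; by move: Hr; rewrite E' Hl0.
    * split=> // _; exists l'; by rewrite Hr.
Qed.
End Pf.

Theorem proposition1
  (Spot Field : finType) (PAtom : eqType)
  (proatom : nat -> PAtom) (proinv : PAtom -> nat)
  (Hpro1 : forall n, 0 < n -> proinv (proatom n) = n)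
  (Hpro2 : forall a, proatom (proinv a) = a)
  (Hpro3 : forall a, 0 < proinv a)
  (Foci Meth : {set Spot}) (HFM : [disjoint Foci & Meth])
  (stop ajmp focus method pos neg : Field)
  (Hfields : uniq [:: stop; ajmp; focus; method; pos; neg])
  (P : seq (instr Spot))
  (Hk : 0 < size P)
  (HPfoci : forall f, f \in foci_of P -> f \in Foci)
  (HPmeth : forall m, m \in meths_of P -> m \in Meth)
  (s u v : Spot) (sj : nat -> Spot)
  (Hsuv : uniq [:: s; u; v])
  (Hsj_inj : forall i i', 1 <= i <= size P + 2 -> 1 <= i' <= size P + 2 ->
                sj i = sj i' -> i = i')
  (Hsj_suv : forall i, 1 <= i <= size P + 2 -> sj i \notin [:: s; u; v])
  (Hspots : forall x, x \in s :: u :: v :: [seq sj i | i <- iota 1 (size P + 2)] ->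
                x \notin Foci :|: Meth) :
  let k := size P in
  let t := run proatom proinv (pgldmd stop ajmp focus method pos neg s sj P) in
  let Y := @yld Spot Field PAtom in
  let E := @eff Spot Field PAtom proatom proinv in
  Y (Equal s (sj 1)) t /\
  forall (j l : nat) (f m : Spot),
    1 <= j <= k -> 1 <= l <= k -> f \in Foci -> m \in Meth ->
    let uj := nth (AJmp 0) P j.-1 in
    let c8 (p q : nat) :=
      Y (Getfield u (sj j) focus) t /\
      Y (Equal u f) (E (Getfield u (sj j) focus) t) /\
      Y (Getfield v (sj j) method) t /\
      Y (Equal v m) (E (Getfield v (sj j) method) t) /\
      Y (Getfield s (sj j) pos) t /\
      Y (Equal s (sj p)) (E (Getfield s (sj j) pos) t) /\
      Y (Getfield s (sj j) neg) t /\
      Y (Equal s (sj q)) (E (Getfield s (sj j) neg) t) in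
    [/\ (uj = Basic f m <-> c8 j.+1 j.+1),
        (uj = PTest f m <-> c8 j.+1 j.+2),
        (uj = NTest f m <-> c8 j.+2 j.+1),
        (uj = AJmp l <->
           Y (Getfield s (sj j) ajmp) t /\
           Y (Equal s (sj l)) (E (Getfield s (sj j) ajmp) t)) &
        ((exists l', ~~ (1 <= l' <= k) /\ uj = AJmp l') <->
           Y (Hasfield (sj j) stop) t)].
Proof.
move=> k t Y E.
exact: (@main Spot Field PAtom proatom proinv Hpro1 stop ajmp focus method pos neg Hfields sj Foci Meth HFM P Hk HPfoci HPmeth s u v Hsuv Hsj_inj Hsj_suv Hspots).
Qed.
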